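(* Let $\mathcal{C}$ be a category and $J$ a directed partially ordered set. Every inverse system $\boldsymbol{X}$ in $\mathcal{C}$ is isomorphic in $pro^J$-$\mathcal{C}$ to a cofinite inverse system $\boldsymbol{X}'$ (i.e. one whose index set is cofinite).
   Context: An inverse system $\boldsymbol{X}=(X_\lambda,p_{\lambda\lambda'},\Lambda)$ in $\mathcal{C}$: $\Lambda$ directed preordered, morphisms $p_{\lambda\lambda'}:X_{\lambda'}\to X_\lambda$ for $\lambda\le\lambda'$, $p_{\lambda\lambda}=1$, $p_{\lambda\lambda'}p_{\lambda'\lambda''}=p_{\lambda\lambda''}$. A directed set is cofinite if each element has finitely many predecessors. A $J$-morphism $(f,f^j_\mu):\boldsymbol{X}\to\boldsymbol{Y}=(Y_\mu,q_{\mu\mu'},M)$: $f:M\to\Lambda$ and $\mathcal{C}$-morphisms $f^j_\mu:X_{f(\mu)}\to Y_\mu$ ($\mu\in M$, $j\in J$) such that for all $\mu\le\mu'$ there exist $\lambda\ge f(\mu),f(\mu')$ and $j_0$ with $f^{j'}_\mu p_{f(\mu)\lambda}=q_{\mu\mu'}f^{j'}_{\mu'}p_{f(\mu')\lambda}$ for all $j'\ge j_0$. Composition $(g,g^j_\nu)(f,f^j_\mu)=(fg,g^j_\nu f^j_{g(\nu)})$, identity $(1_\Lambda,1_{X_\lambda})$. $(f,f^j_\mu)\sim(f',f'^j_\mu)$ iff for every $\mu$ there exist $\lambda\ge f(\mu),f'(\mu)$ and $j_0$ with $f^{j'}_\mu p_{f(\mu)\lambda}=f'^{j'}_\mu p_{f'(\mu)\lambda}$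 for all $j'\ge j_0$. $pro^J$-$\mathcal{C}$ is the resulting quotient category. *)

(* Defs.v *)
From Stdlib Require Import List.
Set Implicit Arguments.

(* A (locally small or not) category. [comp g f] is g o f. *)
Record Category := {
  Ob : Type;
  Hom : Ob -> Ob -> Type;
  comp : forall a b c : Ob, Hom b c -> Hom a b -> Hom a c;
  idm : forall a : Ob, Hom a a;
  comp_assoc : forall a b c d (h : Hom c d) (g : Hom b c) (f : Hom a b),
      comp h (comp g f) = comp (comp h g) f;
  comp_id_l : forall a b (f : Hom a b), comp (idm b) f = f;
  comp_id_r : forall a b (f : Hom a b), comp f (idm a) = f
}.
Arguments comp {_ _ _ _} _ _.
Arguments idm {_} _.

(* Directed sets are taken nonempty (standard convention). *)
Definition directed {I : Type} (le : I -> I -> Prop) : Prop :=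
  inhabited I /\ forall a b : I, exists c, le a c /\ le b c.

Record DirPoset := {
  Jt : Type;
  leJ : Jt -> Jt -> Prop;
  leJ_refl : forall j, leJ j j;
  leJ_trans : forall i j k, leJ i j -> leJ j k -> leJ i k;
  leJ_antisym : forall i j, leJ i j -> leJ j i -> i = j;
  leJ_directed : directed leJ
}.

Record InvSys (C : Category) := {
  Idx : Type;
  le : Idx -> Idx -> Prop;
  le_refl : forall l, le l l;
  le_trans : forall l l' l'', le l l' -> le l' l'' -> le l l'';
  le_directed : directed le;
  obj : Idx -> Ob C;
  bond : forall l l', le l l' -> Hom C (obj l') (obj l);
  bond_id : forall l (h : le l l), bond h = idm (obj l);
  bond_comp : forall l l' l'' (h1 : le l l') (h2 : le l' l'') (h3 : le l l''),
      comp (bond h1) (bond h2) = bond h3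
}.
Arguments Idx {C} _.
Arguments le {C} _ _ _.
Arguments obj {C} _ _.
Arguments bond {C} _ {_ _} _.

Definition cofinite {C : Category} (X : InvSys C) : Prop :=
  forall l : Idx X, exists s : list (Idx X), forall l', le X l' l -> In l' s.

(* Raw data of a J-morphism X -> Y: an index map f : M -> Lambda and
   morphisms f^j_mu : X_{f mu} -> Y_mu. *)
Record JData (C : Category) (J : DirPoset) (X Y : InvSys C) := {
  imap : Idx Y -> Idx X;
  cmp : Jt J -> forall mu : Idx Y, Hom C (obj X (imap mu)) (obj Y mu)
}.
Arguments imap {C J X Y} _ _.
Arguments cmp {C J X Y} _ _ _.

Definition is_Jmorphism {C : Category} {J : DirPoset} {X Y : InvSys C}
  (F : JData J X Y) : Prop :=
  forall (mu mu' : Idx Y) (h : le Y mu mu'),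
    exists (lam : Idx X) (h1 : le X (imap F mu) lam) (h2 : le X (imap F mu') lam)
           (j0 : Jt J),
      forall j', leJ J j0 j' ->
        comp (cmp F j' mu) (bond X h1) =
        comp (bond Y h) (comp (cmp F j' mu') (bond X h2)).

Definition Jcomp {C : Category} {J : DirPoset} {X Y Z : InvSys C}
  (G : JData J Y Z) (F : JData J X Y) : JData J X Z :=
  {| imap := fun nu => imap F (imap G nu);
     cmp := fun j nu => comp (cmp G j nu) (cmp F j (imap G nu)) |}.

Definition Jid {C : Category} (J : DirPoset) (X : InvSys C) : JData J X X :=
  {| imap := fun l => l; cmp := fun _ l => idm (obj X l) |}.

Definition Jequiv {C : Category} {J : DirPoset} {X Y : InvSys C}
  (F F' : JData J X Y) : Prop :=
  forall mu : Idx Y,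
    exists (lam : Idx X) (h1 : le X (imap F mu) lam) (h2 : le X (imap F' mu) lam)
           (j0 : Jt J),
      forall j', leJ J j0 j' ->
        comp (cmp F j' mu) (bond X h1) = comp (cmp F' j' mu) (bond X h2).

Definition iso_proJ {C : Category} (J : DirPoset) (X Y : InvSys C) : Prop :=
  exists (F : JData J X Y) (G : JData J Y X),
    is_Jmorphism F /\ is_Jmorphism G /\
    Jequiv (Jcomp G F) (Jid J X) /\ Jequiv (Jcomp F G) (Jid J Y).

(* Main.v *)
Require Import Defs.
From Stdlib Require Import List.
Import ListNotations.

Inductive Sub {A : Type} : list A -> list A -> Prop :=
| sub_nil : Sub [] []
| sub_skip : forall x l l', Sub l l' -> Sub l (x :: l')
| sub_take : forall x l l', Sub l l' -> Sub (x :: l) (x :: l').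

Lemma Sub_nil_l {A} (l : list A) : Sub [] l.
Proof. induction l; constructor; auto. Qed.

Lemma Sub_refl {A} (l : list A) : Sub l l.
Proof. induction l; [constructor | apply sub_take; auto]. Qed.

Lemma Sub_trans {A} (a b c : list A) : Sub a b -> Sub b c -> Sub a c.
Proof.
  intros H1 H2; revert a H1; induction H2; intros a H1.
  - exact H1.
  - apply sub_skip; auto.
  - inversion H1; subst; [apply sub_skip | apply sub_take]; auto.
Qed.

Lemma Sub_app_r {A} (a b c : list A) : Sub a b -> Sub a (b ++ c).
Proof.
  intro H; induction H; simpl.
  - apply Sub_nil_l.
  - apply sub_skip; auto.
  - apply sub_take; auto.
Qed.

Lemma Sub_app_l {A} (a b c : list A) : Sub a b -> Sub a (c ++ b).
Proof. intro H; induction c; simpl; auto. apply sub_skip; auto. Qed.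

Fixpoint subseqs {A} (l : list A) : list (list A) :=
  match l with
  | [] => [[]]
  | x :: l => map (cons x) (subseqs l) ++ subseqs l
  end.

Lemma Sub_in {A} (u w : list A) : Sub u w -> In u (subseqs w).
Proof.
  intro H; induction H; simpl; auto.
  - apply in_or_app; right; auto.
  - apply in_or_app; left; apply in_map; auto.
Qed.

Lemma bond_pi {C : Category} (X : InvSys C) l l' (h h' : le X l l') :
  bond X h = bond X h'.
Proof.
  rewrite <- (bond_comp X _ _ _ h (le_refl X l') h').
  rewrite bond_id, comp_id_r. reflexivity.
Qed.

Section Cons.
Context {C : Category} (X : InvSys C).

Definition I' := (list (Idx X) * Idx X)%type.
Definition le' (a b : I') : Prop :=
  Sub (fst a ++ [snd a]) (fst b ++ [snd b]) /\ le X (snd a) (snd b).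

Lemma le'_refl a : le' a a.
Proof. split; [apply Sub_refl | apply le_refl]. Qed.

Lemma le'_trans a b c : le' a b -> le' b c -> le' a c.
Proof.
  intros [H1 H2] [H3 H4]; split; [eapply Sub_trans; eauto | eapply le_trans; eauto].
Qed.

Lemma le'_dir : directed le'.
Proof.
  destruct (le_directed X) as [[l0] D]. split.
  - constructor; exact ([], l0).
  - intros [s m] [t n]. destruct (D m n) as [k [Hm Hn]].
    exists ((s ++ [m]) ++ (t ++ [n]), k). unfold le'; cbn [fst snd]. split; split; auto.
    + rewrite <- !app_assoc. rewrite app_assoc. apply Sub_app_r. apply Sub_refl.
    + rewrite <- app_assoc. apply Sub_app_l. apply Sub_app_r. apply Sub_refl.
Qed.

Definition bond' {a b : I'} (h : le' a b) : Hom C (obj X (snd b)) (obj X (snd a)) :=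
  bond X (proj2 h).

Lemma bond'_id a (h : le' a a) : bond' h = idm _.
Proof. unfold bond'. apply bond_id. Qed.

Lemma bond'_comp a b c (h1 : le' a b) (h2 : le' b c) (h3 : le' a c) :
  comp (bond' h1) (bond' h2) = bond' h3.
Proof. unfold bond'. apply bond_comp. Qed.

Definition X' : InvSys C :=
  {| Idx := I'; le := le'; le_refl := le'_refl; le_trans := le'_trans;
     le_directed := le'_dir; obj := fun a => obj X (snd a);
     bond := @bond'; bond_id := bond'_id; bond_comp := bond'_comp |}.

Lemma X'_cofinite : cofinite X'.
Proof.
  intros [t n]. exists (map (fun u => (removelast u, last u n)) (subseqs (t ++ [n]))).
  intros [s m] [H _]. simpl in H.
  replace (s, m) with ((fun u => (removelast u, last u n)) (s ++ [m])).
  - apply (in_map (fun u => (removelast u, last u n))). apply Sub_in. exact H.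
  - cbv beta. rewrite removelast_last, last_last. reflexivity.
Qed.
End Cons.

Theorem corollary1 (C : Category) (J : DirPoset) (X : InvSys C) :
  exists X' : InvSys C, cofinite X' /\ iso_proJ J X X'.
Proof.
  destruct (leJ_directed J) as [[j0] _].
  exists (X' X). split; [apply X'_cofinite |].
  set (F := {| imap := fun a : Idx (X' X) => snd a;
               cmp := fun (_ : Jt J) (a : Idx (X' X)) => idm (obj X (snd a)) |}
        : JData J X (X' X)).
  set (G := {| imap := fun l : Idx X => (@nil (Idx X), l) : Idx (X' X);
               cmp := fun (_ : Jt J) (l : Idx X) => idm (obj X l) |}
        : JData J (X' X) X).
  exists F, G. split; [|split; [|split]].
  - intros [s m] [t n] h.
    exists n, (proj2 h), (le_refl X n), j0. intros j' _. simpl.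
    unfold bond'. rewrite !comp_id_l, bond_id, comp_id_r.
    reflexivity.
  - intros l l' h.
    assert (h1 : le' X ([], l) ([l], l')).
    { split; simpl; [apply sub_take; apply Sub_nil_l | exact h]. }
    assert (h2 : le' X ([], l') ([l], l')).
    { split; simpl; [apply sub_skip, Sub_refl | apply le_refl]. }
    exists ([l], l'), h1, h2, j0. intros j' _. simpl.
    rewrite !comp_id_l. unfold bond'. simpl. rewrite bond_id, comp_id_r. apply bond_pi.
  - intros l. exists l, (le_refl X l), (le_refl X l), j0. intros j' _. simpl.
    rewrite !comp_id_l. reflexivity.
  - intros [s m].
    assert (h1 : le' X ([], m) (s, m)).
    { split; simpl; [apply Sub_app_l, Sub_refl | apply le_refl]. }
    exists (s, m), h1, (le'_refl X (s, m)), j0. intros j' _. simpl.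
    rewrite !comp_id_l. unfold bond'. simpl. apply bond_pi.
Qed.
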